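(* Let $\Omega$ be any norm on $\mathbb{R}^k$ with dual norm $\Omega_*$, let $-1=x_1<\cdots<x_n=1$ be real numbers, and let $U_X=\{-1,1\}\times\{x_1,\ldots,x_n\}$. Suppose $\alpha_1,\ldots,\alpha_n\in\mathbb{R}^k$ satisfy $$\Omega_*\Big(\sum_{i=1}^n\alpha_i\phi_u(x_i)\Big)\le 1\quad\forall u\in U_X.$$ Then $\Omega_*\big(\sum_{i=1}^n\alpha_i\phi_u(x_i)\big)\le 1$ for all $u\in\mathbb{U}$; i.e., $\alpha_1,\ldots,\alpha_n$ are feasible for the dual problem $$\sup_{\alpha_1,\ldots,\alpha_n\in\mathbb{R}^k}\ -\sum_{i=1}^n\sigma_{S_i}(\alpha_i)\quad\text{subject to}\quad \Omega_*\Big(\sum_{i=1}^n\alpha_i\phi_u(x_i)\Big)\le 1\ \ \forall u\in\mathbb{U}$$ (for any non-empty closed convex sets $S_1,\ldots,S_n\subseteq\mathbb{R}^k$).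
   Context: Let $\mathbb{U}=\{-1,1\}\times[-1,1]$. For $u=(s,c)\in\mathbb{U}$ and $x\in\mathbb{R}$ let $\phi_u(x)=(s(x-c))_+$, where $(t)_+=\max(t,0)$. $\Omega_*(z)=\sup_{\Omega(v)\le1}\langle v,z\rangle$ is the dual norm. For a convex set $S$, $\sigma_S(y)=\sup_{w\in S}w^Ty$ is its support function. *)

(* Defs.v *)
From mathcomp Require Import all_boot all_order all_algebra.
From mathcomp Require Import classical_sets reals.
Set Implicit Arguments. Unset Strict Implicit. Unset Printing Implicit Defensive.
Import Order.TTheory GRing.Theory Num.Theory.
Local Open Scope ring_scope.
Local Open Scope classical_set_scope.

Definition dotv (R : realType) (k : nat) (v z : 'rV[R]_k) : R :=
  \sum_(j < k) v 0 j * z 0 j.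

Definition is_norm (R : realType) (k : nat) (Omega : 'rV[R]_k -> R) : Prop :=
  [/\ forall v, 0 <= Omega v,
      forall v, Omega v = 0 -> v = 0,
      forall (a : R) v, Omega (a *: v) = `|a| * Omega v &
      forall v w, Omega (v + w) <= Omega v + Omega w].

Definition dual_norm (R : realType) (k : nat) (Omega : 'rV[R]_k -> R)
  (z : 'rV[R]_k) : R :=
  sup [set r : R | exists v, Omega v <= 1 /\ r = dotv v z].

(* phi_u(x) = (s (x - c))_+ for u = (s, c). *)
Definition phi (R : realType) (s c x : R) : R := Num.max (s * (x - c)) 0.

Definition inU (R : realType) (s c : R) : Prop :=
  (s = 1 \/ s = -1) /\ -1 <= c <= 1.

Definition comb (R : realType) (k n : nat) (alpha : 'I_n -> 'rV[R]_k)
  (x : 'I_n -> R) (s c : R) : 'rV[R]_k :=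
  \sum_(i < n) phi s c (x i) *: alpha i.

(* Main.v *)
Require Import Defs.
From mathcomp Require Import all_boot all_order all_algebra.
From mathcomp Require Import all_classical all_reals all_analysis.
From mathcomp Require Import ring lra.
Import Order.TTheory GRing.Theory Num.Theory.
Import numFieldNormedType.Exports.
Local Open Scope ring_scope.
Local Open Scope classical_set_scope.

Section S.
Variables (R : realType) (k : nat) (Omega : 'rV[R]_k -> R).
Hypothesis hO : is_norm Omega.

Lemma O0 : Omega 0 = 0.
Proof. case: hO => _ _ hZ _. by rewrite -(scale0r (0 : 'rV[R]_k)) hZ normr0 mul0r. Qed.

Lemma Osum (I : Type) (r : seq I) (F : I -> 'rV[R]_k) :
  Omega (\sum_(i <- r) F i) <= \sum_(i <- r) Omega (F i).
Proof.
case: hO => _ _ _ hT.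
elim: r => [|a r IH]; first by rewrite !big_nil O0.
rewrite !big_cons; apply: le_trans (hT _ _) _; exact: lerD.
Qed.

Lemma entry_le (v : 'rV[R]_k) j : `|v 0 j| <= `|v|.
Proof.
have -> : `|v| = mx_norm v by [].
rewrite mx_normrE.
apply/bigmax_geP; right; by exists (0, j).
Qed.

Definition Mk := \sum_(j < k) Omega (delta_mx 0 j).

Lemma O_upper v : Omega v <= Mk * `|v|.
Proof.
case: hO => hP _ hZ _.
rewrite {1}(row_sum_delta v); apply: le_trans (Osum _ _ _) _.
rewrite /Mk mulr_suml; apply: ler_sum => j _.
rewrite hZ mulrC; apply: ler_wpM2l; [exact: hP | exact: entry_le].
Qed.

Lemma O_cont : continuous Omega.
Proof.
case: hO => hP _ hZ hT.
move=> v; apply/(@cvgrPdist_lt R R^o _ (nbhs v) _ Omega (Omega v)) => e e0.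
have := (@cvgrPdist_lt R 'rV[R]_k _ (nbhs v) _ id v).1 cvg_id (e / (Mk + 1)).
have Mk0 : 0 <= Mk by apply: sumr_ge0 => j _; exact: hP.
rewrite divr_gt0 ?ltr_wpDl// => /(_ (nbhs_filter v) isT).
apply: filterS => w hw.
have hN : forall u, Omega (- u) = Omega u.
  by move=> u; rewrite -scaleN1r hZ normrN normr1 mul1r.
have h1 : Omega v - Omega w <= Omega (v - w).
  by rewrite lerBlDr; apply: le_trans (hT _ _); rewrite subrK.
have h2 : Omega w - Omega v <= Omega (v - w).
  by rewrite -(hN (v - w)) opprB lerBlDr; apply: le_trans (hT _ _); rewrite subrK.
have h3 : Omega (v - w) < e.
  apply: le_lt_trans (O_upper _) _.
  rewrite -(ltr_pM2r (ltr_wpDl Mk0 ltr01)) in hw.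
  rewrite mulrC in hw; rewrite divfK in hw; last by rewrite gt_eqF // ltr_wpDl.
  apply: le_lt_trans hw. by rewrite ler_wpM2r ?normr_ge0 ?lerDl.
suff H : `|Omega v - Omega w| < e :> R by exact: H.
rewrite ltr_norml; apply/andP; split; last by apply: le_lt_trans h1 h3.
by rewrite ltrNl opprB; apply: le_lt_trans h2 h3.
Qed.


Lemma O_lower : exists2 m : R, 0 < m & forall v, m * `|v| <= Omega v.
Proof.
case: hO => hP h0 hZ hT.
pose A := [set v : 'rV[R]_k | `|v| = 1].
have key : forall v, v != 0 -> A (`|v|^-1 *: v).
  move=> v v0; rewrite /A /= normrZ normfV normr_id mulVf //.
  by rewrite normr_eq0.
have [[u Au]|nA] := pselect (A !=set0); last first.
  exists 1 => // v; case: (eqVneq v 0) => [->|v0]; first by rewrite normr0 mulr0 hP.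
  by exfalso; apply: nA; exists (`|v|^-1 *: v); exact: key.
have cA : compact A.
  apply: bounded_closed_compact.
    rewrite /= /bounded_near; near=> M => x Ax.
    rewrite /= Ax; near: M; exact: nbhs_pinfty_ge.
  rewrite /A.
  have -> : [set v : 'rV[R]_k | `|v| = 1] = (fun v : 'rV[R]_k => `|v|) @^-1` [set 1].
    by [].
  apply: preimage_closed; last exact: closed_eq.
  move=> x _; exact: norm_continuous.
have [c cinA cmin] := compact_EVT_min (ex_intro _ u Au) cA
   (@continuous_subspaceT _ _ A Omega O_cont).
have c0 : c != 0.
  apply/negP => /eqP c0; move: cinA; rewrite inE /A /= c0 normr0 => /eqP.
  by rewrite eq_sym oner_eq0.
exists (Omega c).
  rewrite lt_def hP andbT; apply/eqP => /h0 /eqP; exact/negP.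
move=> v; case: (eqVneq v 0) => [->|v0]; first by rewrite normr0 mulr0 hP.
have := cmin _ (mem_set (key _ v0)); rewrite hZ normfV normr_id => h.
have vp : 0 < `|v| by rewrite normr_gt0.
rewrite -(ler_pM2l vp) in h.
by rewrite mulrA mulfV ?normr_eq0 // mul1r mulrC in h.
Unshelve. all: end_near.
Qed.


Lemma dot_bound z : exists C, forall v, Omega v <= 1 -> dotv v z <= C.
Proof.
have [m m0 hm] := O_lower.
exists (m^-1 * \sum_(j < k) `|z 0 j|) => v hv.
have nv : `|v| <= m^-1.
  rewrite -(ler_pM2l m0) mulfV ?gt_eqF //; exact: le_trans (hm v) hv.
apply: (@le_trans _ _ (`|v| * \sum_(j < k) `|z 0 j|)); last first.
  by apply: ler_wpM2r => //; apply: sumr_ge0 => j _.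
rewrite /dotv mulr_sumr; apply: ler_sum => j _.
apply: le_trans (ler_norm _) _; rewrite normrM; apply: ler_wpM2r => //.
exact: entry_le.
Qed.

Let S z := [set r : R | exists v, Omega v <= 1 /\ r = dotv v z].

Lemma S_ne z : S z !=set0.
Proof. exists (dotv 0 z), 0; split => //; by rewrite O0. Qed.

Lemma dual_ub z v : Omega v <= 1 -> dotv v z <= dual_norm Omega z.
Proof.
move=> hv; apply: sup_upper_bound; last by exists v.
split; first exact: S_ne.
have [C hC] := dot_bound z; exists C => r [w [hw ->]]; exact: hC.
Qed.

Lemma dotvL (v z1 z2 : 'rV[R]_k) (a b : R) :
  dotv v (a *: z1 + b *: z2) = a * dotv v z1 + b * dotv v z2.
Proof.
rewrite /dotv !mulr_sumr -big_split; apply: eq_bigr => j _; rewrite !mxE.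
by rewrite mulrDr !mulrA [v 0 j * a]mulrC [v 0 j * b]mulrC.
Qed.

Lemma dual_convex z1 z2 t : 0 <= t -> t <= 1 ->
  dual_norm Omega z1 <= 1 -> dual_norm Omega z2 <= 1 ->
  dual_norm Omega (t *: z1 + (1 - t) *: z2) <= 1.
Proof.
move=> t0 t1 h1 h2; apply: ge_sup; first exact: S_ne.
move=> r [v [hv ->]]; rewrite dotvL.
have e1 : dotv v z1 <= 1 by apply: le_trans (dual_ub z1 v hv) h1.
have e2 : dotv v z2 <= 1 by apply: le_trans (dual_ub z2 v hv) h2.
have f1 : t * dotv v z1 <= t by rewrite -{2}(mulr1 t) ler_wpM2l.
have f2 : (1 - t) * dotv v z2 <= 1 - t by rewrite -{2}(mulr1 (1 - t)) ler_wpM2l // subr_ge0.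
apply: le_trans (lerD f1 f2) _; by rewrite addrC subrK.
Qed.

End S.

Lemma phi_interp (R : realType) (s a b c y : R) : (s = 1 \/ s = -1) -> a < b ->
  a <= c -> c <= b -> (y <= a \/ b <= y) ->
  phi s c y = (b - c) / (b - a) * phi s a y + (1 - (b - c) / (b - a)) * phi s b y.
Proof.
move=> hs ab ac cb hy.
set t := (b - c) / (b - a).
have hc : c = t * a + (1 - t) * b.
  rewrite /t; field; by rewrite subr_eq0 gt_eqF.
clearbody t.
rewrite /phi.
case: hs => -> ; case: hy => hy.
- have h1 : 1 * (y - c) <= 0 by lra.
  have h2 : 1 * (y - a) <= 0 by lra.
  have h3 : 1 * (y - b) <= 0 by lra.
  by rewrite (max_r h1) (max_r h2) (max_r h3) !mulr0 addr0.
- have h1 : 0 <= 1 * (y - c) by lra.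
  have h2 : 0 <= 1 * (y - a) by lra.
  have h3 : 0 <= 1 * (y - b) by lra.
  rewrite (max_l h1) (max_l h2) (max_l h3) hc; ring.
- have h1 : 0 <= -1 * (y - c) by lra.
  have h2 : 0 <= -1 * (y - a) by lra.
  have h3 : 0 <= -1 * (y - b) by lra.
  rewrite (max_l h1) (max_l h2) (max_l h3) hc; ring.
- have h1 : -1 * (y - c) <= 0 by lra.
  have h2 : -1 * (y - a) <= 0 by lra.
  have h3 : -1 * (y - b) <= 0 by lra.
  by rewrite (max_r h1) (max_r h2) (max_r h3) !mulr0 addr0.
Qed.

Lemma comb_interp (R : realType) (k n : nat) (alpha : 'I_n -> 'rV[R]_k)
  (x : 'I_n -> R) (s a b c : R) : (s = 1 \/ s = -1) -> a < b ->
  a <= c -> c <= b -> (forall i, x i <= a \/ b <= x i) ->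
  comb alpha x s c = ((b - c) / (b - a)) *: comb alpha x s a
                     + (1 - (b - c) / (b - a)) *: comb alpha x s b.
Proof.
move=> hs ab ac cb hx.
rewrite /comb !scaler_sumr -big_split; apply: eq_bigr => i _.
by rewrite (@phi_interp _ s a b c (x i) hs ab ac cb (hx i)) scalerDl !scalerA.
Qed.

Local Close Scope classical_set_scope.

Theorem lemma2 (R : realType) (k n : nat) (Omega : 'rV[R]_k -> R)
  (x : 'I_n -> R) (alpha : 'I_n -> 'rV[R]_k) :
  is_norm Omega ->
  (0 < n)%N ->
  (forall i j : 'I_n, (i < j)%N -> x i < x j) ->
  (forall i : 'I_n, val i = 0%N -> x i = -1) ->
  (forall i : 'I_n, val i = n.-1 -> x i = 1) ->
  (forall (s : R) (i : 'I_n), (s = 1 \/ s = -1) ->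
     dual_norm Omega (comb alpha x s (x i)) <= 1) ->
  forall s c : R, inU s c -> dual_norm Omega (comb alpha x s c) <= 1.
Proof.
move=> hO; case: n x alpha => [|n] x alpha // _ hmono hfirst hlast hyp s c [hs /andP[c1 c2]].
have hle : forall l l' : 'I_n.+1, (l <= l')%N -> x l <= x l'.
  move=> l l'; rewrite leq_eqVlt => /orP[/eqP e|lt]; last exact/ltW/hmono.
  by rewrite (val_inj e).
pose P m := (m < n.+1)%N && (x (inord m) <= c).
have exP : exists m, P m.
  exists 0%N; rewrite /P /= hfirst //; exact: inordK.
have ubP : forall m, P m -> (m <= n)%N by move=> m /andP[].
case: (ex_maxnP exP ubP) => i /andP[iltn xic] imax.
have [ein|ilt] := eqVneq i n.
  have xi1 : x (inord i) = 1 by apply: hlast; rewrite /= ein; exact: inordK.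
  have -> : c = x (inord i) by apply/eqP; rewrite eq_le xic xi1 c2.
  exact: hyp.
have ij : (i.+1 < n.+1)%N by rewrite ltnS ltn_neqAle ilt -ltnS iltn.
have cj : c < x (inord i.+1).
  rewrite ltNge; apply/negP => h.
  have := imax i.+1; rewrite /P ij h => /(_ isT); by rewrite ltnn.
have ab : x (inord i) < x (inord i.+1) by apply: hmono; rewrite !inordK.
rewrite (@comb_interp _ _ _ alpha x s _ _ c hs ab xic (ltW cj)); last first.
  move=> l; case: (leqP l i) => hl.
    by left; apply: hle; rewrite inordK.
  by right; apply: hle; rewrite inordK.
apply: dual_convex => //.
- by apply: divr_ge0; rewrite subr_ge0 ltW.
- rewrite ler_pdivrMr ?subr_gt0 // mul1r; apply: lerB => //.
- exact: hyp.
- exact: hyp.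
Qed.
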